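(* Let $\Delta t>0$, let $L\in\mathbb{R}^{3\times 3}$ be symmetric positive definite, let $\mathcal{Z}\subset\mathfrak{so}(3)$ be a finite set, let $\Psi:\mathfrak{so}(3)\times\mathfrak{so}(3)\to SO(3)$ be a given map, and let $A_{k+1}\in\mathfrak{so}(3)$ and $Y_{k+1}\in SO(3)$ be given. Suppose $V_k:SO(3)\to\mathbb{R}$ has the min-plus affine form $$V_k(R)=\min_{\lambda\in\Lambda_k}\Big[c_\lambda-\tfrac12\,\mathrm{tr}(M_\lambda R)\Big],$$ where $\Lambda_k$ is a finite index set, $c_\lambda\in\mathbb{R}$ and $M_\lambda\in\mathbb{R}^{3\times3}$. Define $V_{k+1}:SO(3)\to\mathbb{R}$ by the one-step dynamic programming recursion $$V_{k+1}(R)=\min_{z\in\mathcal{Z}}\Big\{\tfrac12\,\mathrm{tr}(z^Tz)\,\Delta t+\tfrac14\,\phi_{L^{-1}}(R^{-1}Y_{k+1})\,\Delta t+V_k\big(R\,\Psi(A_{k+1},z)\big)\Big\},$$ where $\phi_M(Q):=\mathrm{tr}\big[(Q-I)^TM(Q-I)\big]$. Then $V_{k+1}$ has the same min-plus affine form: $$V_{k+1}(R)=\min_{(\lambda,z)\in\Lambda_k\times\mathcal{Z}}\Big[c_{(\lambda,z)}-\tfrac12\,\mathrm{tr}\big(M_{(\lambda,z)}R\big)\Big]\quad\text{for all }R\in SO(3),$$ with $$c_{(\lambda,z)}=c_\lambda+\tfrac12\,\mathrm{tr}(z^Tz)\,\Delta t+\tfrac12\,\mathrm{tr}(L^{-1})\,\Delta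 t,\qquad M_{(\lambda,z)}=(L^{-1})^TY_{k+1}^T\,\Delta t+\Psi(A_{k+1},z)\,M_\lambda .$$
   Context: $SO(3)$ is the group of $3\times3$ real orthogonal matrices with determinant $1$ and $\mathfrak{so}(3)$ the space of $3\times3$ real skew-symmetric matrices. This result concerns deterministic (minimum-energy) attitude filtering for the system $\dot R=R(A+z)$, $Y=R\epsilon$ with $\epsilon\in SO(3)$, where the value function is propagated backward in time by dynamic programming over a finite discretized disturbance set $\mathcal{Z}$, and $\Psi(A,z)$ denotes the (discretized) backward state-transition factor, so that the previous state is $R\,\Psi(A_{k+1},z)$. The min-plus notation $\bigoplus$/$\otimes$ stands for $\min$/$+$. *)

(* Defs.v *)
From HB Require Import structures.
From mathcomp Require Import all_boot all_order all_algebra.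
Set Implicit Arguments. Unset Strict Implicit. Unset Printing Implicit Defensive.
Import Order.TTheory GRing.Theory Num.Theory.
Local Open Scope ring_scope.

Definition SO3 {R : realFieldType} (Q : 'M[R]_3) : Prop :=
  Q^T *m Q = 1%:M /\ \det Q = 1.

Definition so3 {R : realFieldType} (A : 'M[R]_3) : Prop := A^T = - A.

Definition sym_posdef {R : realFieldType} (L : 'M[R]_3) : Prop :=
  L^T = L /\ forall v : 'rV[R]_3, v != 0 -> 0 < (v *m L *m v^T) 0 0.

(* Minimum of a list of reals (the list is always nonempty where used;
   the value 0 for the empty list is an unused convention). *)
Definition seqmin {R : realFieldType} (s : seq R) : R :=
  match s with [::] => 0 | x :: s' => foldr Num.min x s' end.

Definition minover {R : realFieldType} {T : Type} (s : seq T) (f : T -> R) : R :=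
  seqmin (map f s).

Definition phi {R : realFieldType} (M Q : 'M[R]_3) : R :=
  \tr ((Q - 1%:M)^T *m M *m (Q - 1%:M)).

(* Main.v *)
Require Import Defs.
From HB Require Import structures.
From mathcomp Require Import all_boot all_order all_algebra ring.
Import Order.TTheory GRing.Theory Num.Theory.
Local Open Scope ring_scope.
Section S.
Variable R : realFieldType.

Lemma foldr_min_le (x : R) s y : y \in x :: s -> foldr Num.min x s <= y.
Proof.
elim: s y => [|a s IH] y /=; first by rewrite inE => /eqP ->.
rewrite !inE => /orP[/eqP->|/orP[/eqP->|H]]; rewrite ge_min.
- by rewrite (IH x) ?orbT // inE eqxx.
- by rewrite lexx.
- by rewrite (IH y) ?orbT // inE H orbT.
Qed.

Lemma foldr_min_mem (x : R) s : foldr Num.min x s \in x :: s.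
Proof.
elim: s => [|a s IH] /=; first by rewrite inE.
rewrite /Num.min; case: ifP => _; first by rewrite !inE eqxx orbT.
move: IH; rewrite !inE => /orP[->|->]; by rewrite ?orbT.
Qed.

Lemma minover_le {T : eqType} (s : seq T) (f : T -> R) x :
  x \in s -> minover s f <= f x.
Proof.
move=> Hx; rewrite /minover /seqmin.
case E: (map f s) => [|a t]; first by move: (map_f f Hx); rewrite E.
apply: foldr_min_le; rewrite -E; exact: map_f.
Qed.

Lemma minover_mem {T : eqType} (s : seq T) (f : T -> R) :
  s != [::] -> exists2 x, x \in s & minover s f = f x.
Proof.
move=> Hs; rewrite /minover /seqmin.
case E: (map f s) => [|a t]; first by move: Hs; case: s E.
have := foldr_min_mem a t; rewrite -E => /mapP[x Hx ->]; by exists x.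
Qed.

Lemma SO3_inv (Q : 'M[R]_3) : SO3 Q -> invmx Q = Q^T /\ Q *m Q^T = 1%:M.
Proof.
move=> [H1 H2].
have H3 : Q *m Q^T = 1%:M by exact: mulmx1C.
have U : Q \in unitmx by rewrite unitmxE H2 unitr1.
split=> //.
by rewrite -[invmx Q]mulmx1 -H3 mulmxA mulVmx // mul1mx.
Qed.

Lemma SO3_mul (P Q : 'M[R]_3) : SO3 P -> SO3 Q -> SO3 (P *m Q).
Proof.
move=> [P1 P2] [Q1 Q2]; split; last by rewrite det_mulmx P2 Q2 mulr1.
by rewrite trmx_mul mulmxA -(mulmxA Q^T) P1 mulmx1 Q1.
Qed.
End S.
Lemma expand3 (R : comPzRingType) (A L B : 'M[R]_3) :
  \tr ((A - 1%:M) *m L *m (B - 1%:M)) =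
  \tr (A *m L *m B) - \tr (A *m L) - \tr (L *m B) + \tr L.
Proof.
rewrite mulmxBl mul1mx [_ *m (B - _)]mulmxBr mulmx1 mulmxBl !raddfB /=.
by rewrite opprK addrA; ring.
Qed.

Lemma phi_id (R : realFieldType) (Li Q Y : 'M[R]_3) :
  Li^T = Li -> SO3 Q -> SO3 Y ->
  phi Li (invmx Q *m Y) = 2 * \tr Li - 2 * \tr (Li *m Y^T *m Q).
Proof.
move=> HL HQ HY.
have [-> _] := @SO3_inv _ _ HQ.
have [_ HY2] := @SO3_inv _ _ HY.
set P := Q^T *m Y.
have PP : P *m P^T = 1%:M.
  by rewrite /P trmx_mul trmxK mulmxA -(mulmxA Q^T) HY2 mulmx1 (proj1 HQ).
have T1 : \tr (P^T *m Li *m P) = \tr Li.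
  by rewrite mxtrace_mulC mulmxA PP mul1mx.
have T2 : \tr (P^T *m Li) = \tr (Li *m P).
  by rewrite -mxtrace_tr trmx_mul trmxK HL.
have T3 : \tr (Li *m Y^T *m Q) = \tr (Li *m P).
  rewrite -mxtrace_tr !trmx_mul trmxK HL /P.
  by rewrite mulmxA mxtrace_mulC.
have TB : (P - 1%:M)^T = P^T - 1%:M.
  by apply/matrixP => i j; rewrite !mxE eq_sym.
unfold phi. rewrite TB.
rewrite expand3 T1 T2 T3.
rewrite -/P; ring.
Qed.
Theorem mainTheorem1 (R : realFieldType) (dt : R) (L : 'M[R]_3)
  (Z : seq 'M[R]_3) (Psi : 'M[R]_3 -> 'M[R]_3 -> 'M[R]_3)
  (A1 Y1 : 'M[R]_3)
  (Lam : finType) (c : Lam -> R) (M : Lam -> 'M[R]_3)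
  (Vk Vk1 : 'M[R]_3 -> R) :
  0 < dt ->
  sym_posdef L ->
  uniq Z -> Z != [::] -> (forall z, z \in Z -> so3 z) ->
  (forall A z, so3 A -> so3 z -> SO3 (Psi A z)) ->
  so3 A1 -> SO3 Y1 ->
  (0 < #|Lam|)%N ->
  (forall Q, SO3 Q ->
     Vk Q = minover (enum Lam) (fun l => c l - 2^-1 * \tr (M l *m Q))) ->
  (forall Q, SO3 Q ->
     Vk1 Q = minover Z (fun z =>
        2^-1 * \tr (z^T *m z) * dt
        + 4^-1 * phi (invmx L) (invmx Q *m Y1) * dt
        + Vk (Q *m Psi A1 z))) ->
  forall Q, SO3 Q ->
    Vk1 Q = minover [seq (l, z) | l <- enum Lam, z <- Z]
      (fun lz : Lam * 'M[R]_3 =>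
         (c lz.1 + 2^-1 * \tr (lz.2^T *m lz.2) * dt
                 + 2^-1 * \tr (invmx L) * dt)
         - 2^-1 * \tr ((dt *: ((invmx L)^T *m Y1^T)
                        + Psi A1 lz.2 *m M lz.1) *m Q)).
Proof.
move=> dt_gt0 [LT _] uZ Z0 Zso Psiso A1so Y1so Lam0 HVk HVk1 Q HQ.
have HLi : (invmx L)^T = invmx L by rewrite trmx_inv LT.
set g := (fun lz : Lam * 'M[R]_3 => _).
set a := fun z : 'M[R]_3 => 2^-1 * \tr (z^T *m z) * dt
        + 4^-1 * phi (invmx L) (invmx Q *m Y1) * dt.
set h := fun (l : Lam) (z : 'M[R]_3) => c l - 2^-1 * \tr (M l *m (Q *m Psi A1 z)).
have key : forall l z, a z + h l z = g (l, z).
  move=> l z; rewrite /a /h /g /= phi_id //.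
  rewrite mulmxDl mxtraceD -scalemxAl mxtraceZ mulmxA.
  rewrite [\tr (M l *m Q *m _)]mxtrace_mulC mulmxA HLi.
  have h4 : (4:R)^-1 * 2 = 2^-1 by field.
  rewrite (mulrBr (4^-1)) !mulrA h4; ring.
have HV : forall z, z \in Z -> Vk (Q *m Psi A1 z) = minover (enum Lam) (fun l => h l z).
  move=> z Hz; rewrite HVk; last by apply: SO3_mul => //; apply: Psiso => //; exact: Zso.
  by [].
rewrite HVk1 //.
have [l0 _] := card_gt0P Lam0.
have El : enum Lam != [::] by apply/eqP => E; move: (mem_enum Lam l0); rewrite E.
apply/eqP; rewrite eq_le; apply/andP; split.
- have NE : [seq (l, z) | l <- enum Lam, z <- Z] != [::].
    case: Z Z0 {uZ Zso HVk1 HV} => // z s _.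
    apply/eqP => E.
    have : (l0, z) \in [seq (l, z) | l <- enum Lam, z <- z :: s].
      by apply: allpairs_f; rewrite ?mem_enum ?inE ?eqxx.
    by rewrite E.
  have [[l z] /allpairsP [[l' z'] [/= Hl Hz [-> ->]]] ->] := @minover_mem _ _ _ g NE.
  apply: le_trans (@minover_le _ _ _ _ _ Hz) _.
  rewrite /= HV // -key lerD2l.
  exact: minover_le.
- have [z Hz ->] := @minover_mem _ _ _ (fun z => a z + Vk (Q *m Psi A1 z)) Z0.
  rewrite /= HV //.
  have [l Hl ->] := @minover_mem _ _ _ (fun l => h l z) El.
  rewrite key; apply: minover_le.
  exact: (allpairs_f pair Hl Hz).
Qed.
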